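(* Let $S$ be a semidomain. The following are equivalent: (a) $S$ satisfies ACCP; (b) $S[x]$ satisfies ACCP; (c) $S[x^{\pm1}]$ satisfies ACCP.
   Context: A semidomain is a subset $S$ of an integral domain $R$ containing $0$ and $1$ and closed under addition and multiplication. $S^*=S\setminus\{0\}$ is a monoid under multiplication. $S$ satisfies ACCP if every ascending chain of principal ideals $b_1S^*\subseteq b_2S^*\subseteq\cdots$ ($b_i\in S^*$) of the monoid $S^*$ eventually stabilizes. $S[x]$ (resp. $S[x^{\pm1}]$) is the semidomain of polynomials (resp. Laurent polynomials) in $R[x]$ (resp. $R[x^{\pm1}]$) with coefficients in $S$. *)

(* Defs.v *)
From HB Require Import structures.
From mathcomp Require Import all_boot all_order all_algebra.
Set Implicit Arguments. Unset Strict Implicit. Unset Printing Implicit Defensive.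
Import Order.TTheory GRing.Theory Num.Theory.
Local Open Scope ring_scope.

Definition semidomain (R : idomainType) (S : R -> Prop) : Prop :=
  [/\ S 0, S 1, (forall a b, S a -> S b -> S (a + b))
    & (forall a b, S a -> S b -> S (a * b))].

Definition Sstar (R : idomainType) (S : R -> Prop) (x : R) : Prop :=
  S x /\ x != 0.

Definition pideal (R : idomainType) (S : R -> Prop) (b : R) (x : R) : Prop :=
  exists s, Sstar S s /\ x = b * s.

Definition pideal_sub (R : idomainType) (S : R -> Prop) (a b : R) : Prop :=
  forall x, pideal S a x -> pideal S b x.

Definition ACCP (R : idomainType) (S : R -> Prop) : Prop :=
  forall b : nat -> R,
    (forall n, Sstar S (b n)) ->
    (forall n, pideal_sub S (b n) (b n.+1)) ->
    exists N, forall n, (N <= n)%N -> forall x, pideal S (b n) x <-> pideal S (b N) x.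

Definition polySD (R : idomainType) (S : R -> Prop) (p : {poly R}) : Prop :=
  forall i, S p`_i.

(* S[x^{±1}] : Laurent polynomials with coefficients in S, realised inside
   R[x^{±1}] ⊆ Frac(R[x]) as the elements p / x^n with p ∈ S[x], n ∈ N. *)
Definition laurentSD (R : idomainType) (S : R -> Prop)
  (f : {fraction {poly R}}) : Prop :=
  exists (p : {poly R}) (n : nat), polySD S p /\ f = FracField.tofrac p / FracField.tofrac ('X^n).

(* Main.v *)
Require Import Defs.
From HB Require Import structures.
From mathcomp Require Import all_boot all_order all_algebra zify ring.
From Stdlib Require Import Classical ClassicalEpsilon.
Import Order.TTheory GRing.Theory Num.Theory.
Local Open Scope ring_scope.
Set Implicit Arguments. Unset Strict Implicit.

Section Gen.
Variables (R : idomainType) (T : R -> Prop).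
Hypothesis T1 : T 1.
Hypothesis TM : forall a b, T a -> T b -> T (a * b).

Lemma SstarM a b : Sstar T a -> Sstar T b -> Sstar T (a * b).
Proof. by move=> [Ta a0] [Tb b0]; split; [apply: TM|rewrite mulf_neq0]. Qed.

Lemma Sstar1 : Sstar T 1.
Proof. by split; [|exact: oner_neq0]. Qed.

Definition dchain (b : nat -> R) :=
  (forall n, Sstar T (b n)) /\ (forall n, exists s, Sstar T s /\ b n = b n.+1 * s).
Definition dstab (b : nat -> R) :=
  exists N, forall n, (N <= n)%N -> exists t, Sstar T t /\ b n.+1 = b n * t.

Lemma ACCP_iffD : ACCP T <-> forall b, dchain b -> dstab b.
Proof.
split.
  move=> H b [Hs Hd].
  have Hsub : forall n, pideal_sub T (b n) (b n.+1).
    move=> n x [s [Ss ->]]; have [t [St ->]] := Hd n.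
    by exists (t * s); split; [exact: SstarM|rewrite mulrA].
  have [N HN] := H b Hs Hsub; exists N => n Nn.
  have : pideal T (b n.+1) (b n.+1) by exists 1; split; [exact: Sstar1|rewrite mulr1].
  rewrite (HN n.+1 (leqW Nn)) -(HN n Nn).
  by move=> [s [Ss ->]]; exists s.
move=> H b Hs Hsub.
have Hd : forall n, exists s, Sstar T s /\ b n = b n.+1 * s.
  move=> n; have := Hsub n (b n); apply; exists 1; split; [exact: Sstar1|by rewrite mulr1].
have [N HN] := H b (conj Hs Hd); exists N.
elim=> [|n IH] Nn x.
  by rewrite leqn0 in Nn; rewrite (eqP Nn).
rewrite leq_eqVlt in Nn; case/orP: Nn => [/eqP <- //|Nn].
rewrite -IH //; split; last exact: (Hsub n).
have [t [St ->]] := HN n Nn.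
by move=> [s [Ss ->]]; exists (t * s); split; [exact: SstarM|rewrite mulrA].
Qed.
End Gen.

Lemma nonincr_stab (f : nat -> nat) : (forall n, (f n.+1 <= f n)%N) ->
  exists N, forall n, (N <= n)%N -> f n = f N.
Proof.
move=> H.
have mono : forall f : nat -> nat, (forall n, (f n.+1 <= f n)%N) -> forall n, (f n <= f 0)%N.
  move=> g Hg; elim=> // n IH; exact: leq_trans (Hg n) IH.
suff: forall m (g : nat -> nat), (g 0 <= m)%N -> (forall n, (g n.+1 <= g n)%N) ->
  exists N, forall n, (N <= n)%N -> g n = g N by move=> /(_ (f 0) f (leqnn _) H).
elim=> [|m IH] g g0 Hg.
  exists 0 => n _; apply/eqP; rewrite eqn_leq mono //= (leq_trans g0) //.
case: (classic (forall n, g n = g 0)) => [Hc|]; first by exists 0.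
move=> /not_all_ex_not [k Hk].
have Hk' : (g k < g 0)%N by rewrite ltn_neqAle mono // andbT; apply/eqP.
have h1 : ((fun i => g (k + i)) 0 <= m)%N by rewrite /= addn0 -ltnS (leq_trans Hk').
have h2 : forall n, ((fun i => g (k + i)) n.+1 <= (fun i => g (k + i)) n)%N by move=> n /=; rewrite addnS; apply: Hg.
have [N HN] := IH _ h1 h2.
exists (k + N)%N => n kn; have := HN (n - k)%N; rewrite subnKC ?(leq_trans (leq_addr _ _) kn) //; apply.
by rewrite leq_subRL // (leq_trans (leq_addr _ _) kn).
Qed.

Section Poly.
Variables (R : idomainType) (S : R -> Prop).
Hypothesis hS : semidomain S.

Lemma S0 : S 0. Proof. by case: hS. Qed.
Lemma S1 : S 1. Proof. by case: hS. Qed.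
Lemma SD a b : S a -> S b -> S (a + b). Proof. by case: hS => _ _ h _; apply: h. Qed.
Lemma SM a b : S a -> S b -> S (a * b). Proof. by case: hS => _ _ _ h; apply: h. Qed.

Lemma polySD_C c : S c -> polySD S c%:P.
Proof. by move=> Sc i; rewrite coefC; case: eqP => _ //; exact: S0. Qed.

Lemma polySD_1 : polySD S 1.
Proof. exact: (polySD_C S1). Qed.

Lemma polySD_M p q : polySD S p -> polySD S q -> polySD S (p * q).
Proof.
move=> Sp Sq i; rewrite coefM; apply: (big_ind S S0 SD) => j _; exact: SM.
Qed.

Lemma polySD_Xn n : polySD S 'X^n.
Proof. by move=> i; rewrite coefXn; case: (i == n); [exact: S1|exact: S0]. Qed.

Lemma lead_polySD p : polySD S p -> S (lead_coef p).
Proof. by move=> Sp; apply: Sp. Qed.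

Lemma accp_poly : ACCP S -> ACCP (polySD S).
Proof.
rewrite (ACCP_iffD S1 SM) (ACCP_iffD polySD_1 polySD_M) => H b [Hs Hd].
have Hle : forall n, (size (b n.+1) <= size (b n))%N.
  move=> n; have [s [[_ s0] ->]] := Hd n.
  have [_ b0] := Hs n.+1.
  rewrite size_mul //; have := size_poly_gt0 s; rewrite s0; lia.
have [N1 HN1] := nonincr_stab Hle.
have Hc : dchain S (fun n => lead_coef (b n)).
  split=> n.
    have [Sb b0] := Hs n; split; [exact: lead_polySD|by rewrite lead_coef_eq0].
  have [s [[Ss s0] ->]] := Hd n.
  exists (lead_coef s); split; last exact: lead_coefM.
  by split; [exact: lead_polySD|rewrite lead_coef_eq0].
have [N2 HN2] := H _ Hc.
exists (maxn N1 N2) => n; rewrite geq_max => /andP [n1 n2].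
have [s [[Ss s0] Hbs]] := Hd n.
have [_ b0] := Hs n.+1.
have hsz : size s = 1%N.
  have := HN1 n.+1 (leqW n1); rewrite -(HN1 n n1) Hbs size_mul //.
  have := size_poly_gt0 s; have := size_poly_gt0 (b n.+1); rewrite s0 b0; lia.
have sC : s = (s`_0)%:P by apply: size1_polyC; rewrite hsz.
have [t [[St t0] Ht]] := HN2 n n2.
have hlc : lead_coef s = s`_0 by rewrite /lead_coef hsz.
have Hl : lead_coef (b n) = lead_coef (b n.+1) * s`_0 by rewrite Hbs lead_coefM hlc.
have bn0 : lead_coef (b n) != 0 by rewrite lead_coef_eq0; case: (Hs n).
have ts : t * s`_0 = 1.
  apply: (mulfI bn0); rewrite mulr1 mulrA -Ht -Hl //.
exists t%:P; split; first by split; [exact: polySD_C|rewrite polyC_eq0].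
have st : s * t%:P = 1 by rewrite sC -polyCM mulrC ts.
by rewrite Hbs -mulrA st mulr1.
Qed.

Lemma accp_poly_inv : ACCP (polySD S) -> ACCP S.
Proof.
rewrite (ACCP_iffD S1 SM) (ACCP_iffD polySD_1 polySD_M) => H c [Hs Hd].
have Hb : dchain (polySD S) (fun n => (c n)%:P).
  split=> n.
    have [Sc c0] := Hs n; split; [exact: polySD_C|by rewrite polyC_eq0].
  have [s [[Ss s0] ->]] := Hd n.
  by exists s%:P; split; [split; [exact: polySD_C|rewrite polyC_eq0]|rewrite polyCM].
have [N HN] := H _ Hb; exists N => n Nn.
have [t [[St t0] Ht]] := HN n Nn.
have e : c n.+1 = c n * t`_0 by rewrite -coefCM -Ht coefC.
exists t`_0; split => //; split; first exact: St.
apply/eqP => h; move: e; rewrite h mulr0 => e.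
by case: (Hs n.+1) => _; rewrite e eqxx.
Qed.
End Poly.

Section Laurent.
Variables (R : idomainType) (S : R -> Prop).
Hypothesis hS : semidomain S.
Local Notation tf := (@FracField.tofrac _).

Lemma tfX_neq0 n : tf ('X^n : {poly R}) != 0.
Proof. by rewrite tofrac_eq0 monic_neq0 // monicXn. Qed.

Lemma laurent_1 : laurentSD S 1.
Proof. by exists 1, 0%N; split; [exact: polySD_1|rewrite expr0 tofrac1 divr1]. Qed.

Lemma laurent_M a b : laurentSD S a -> laurentSD S b -> laurentSD S (a * b).
Proof.
move=> [p [n [Sp ->]]] [q [m [Sq ->]]]; exists (p * q), (n + m)%N; split.
  exact: polySD_M.
by rewrite exprD !tofracM invfM mulrACA.
Qed.

Lemma ord_ex (p : {poly R}) : p != 0 -> exists a, p`_a != 0 /\ forall i, (i < a)%N -> p`_i = 0.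
Proof.
move=> p0.
have ex : exists i, (fun i => p`_i != 0) i by exists (size p).-1; rewrite -lead_coefE lead_coef_eq0.
case: (ex_minnP ex) => a Ha Hmin; exists a; split => // i ia.
by apply/eqP; apply: contraTT ia => /Hmin; rewrite leqNgt.
Qed.

Lemma strip (p : {poly R}) : p != 0 ->
  exists a, (drop_poly a p)`_0 != 0 /\ p = drop_poly a p * 'X^a.
Proof.
move=> /ord_ex [a [pa Ha]]; exists a; split; first by rewrite coef_drop_poly add0n.
rewrite -{1}(poly_take_drop a p).
have -> : take_poly a p = 0.
  by apply/polyP => i; rewrite coef_take_poly coef0; case: ifP => // /Ha.
by rewrite add0r.
Qed.

Lemma norm_laurent f : Sstar (laurentSD S) f ->
  exists q a b, polySD S q /\ q`_0 != 0 /\ f = tf q * (tf ('X^a) / tf ('X^b)).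
Proof.
move=> [[p [n [Sp ->]]] f0].
have p0 : p != 0 by apply: contraNneq f0 => ->; rewrite tofrac0 mul0r.
have [a [qa Hp]] := strip p0.
exists (drop_poly a p), a, n; split.
  by move=> i; rewrite coef_drop_poly; apply: Sp.
by split => //; rewrite {1}Hp tofracM mulrA.
Qed.

Lemma monom_uniq (q1 q2 : {poly R}) i j : q1`_0 != 0 -> q2`_0 != 0 ->
  q1 * 'X^i = q2 * 'X^j -> q1 = q2.
Proof.
move=> h1 h2 e.
have ij : i = j.
  have c1 := congr1 (fun p : {poly R} => p`_i) e.
  have c2 := congr1 (fun p : {poly R} => p`_j) e.
  move: c1 c2 => /=; rewrite !coefMXn !ltnn !subnn.
  case: (ltngtP i j) => // [ij|ij].
    by move=> c1; move: h1; rewrite c1 eqxx.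
  by move=> _ c2; move: h2; rewrite -c2 eqxx.
by subst j; apply: (mulIf (monic_neq0 (monicXn _ _))) e.
Qed.

Lemma laurent_uniq (q1 q2 : {poly R}) a1 b1 a2 b2 : q1`_0 != 0 -> q2`_0 != 0 ->
  tf q1 * (tf ('X^a1) / tf ('X^b1)) = tf q2 * (tf ('X^a2) / tf ('X^b2)) -> q1 = q2.
Proof.
move=> h1 h2; rewrite !mulrA => /eqP; rewrite eqr_div ?tfX_neq0 // -!tofracM tofrac_eq.
rewrite -!mulrA -!exprD => /eqP; exact: monom_uniq.
Qed.
End Laurent.

Lemma ac1 (F : fieldType) (q a b r c d : F) : q * (a / b) * (r * (c / d)) = q * r * (a * c / (b * d)).
Proof. rewrite invfM; ring. Qed.
Lemma ac2 (F : fieldType) (q t a b a' b' : F) : a != 0 -> b != 0 -> b' != 0 ->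
  q * t * (a' / b') = q * (a / b) * (t * (a' * b) / (b' * a)).
Proof. move=> a0 b0 b0'; rewrite invfM; field; by rewrite a0 b0 b0'. Qed.

Section Main.
Variables (R : idomainType) (S : R -> Prop).
Hypothesis hS : semidomain S.
Local Notation tf := (@FracField.tofrac _).

Lemma accp_laurent_inv : ACCP (laurentSD S) -> ACCP S.
Proof.
rewrite (ACCP_iffD (S1 hS) (SM hS)) (ACCP_iffD (laurent_1 hS) (laurent_M hS)) => H c [Hs Hd].
have Hb : dchain (laurentSD S) (fun n => tf (c n)%:P).
  split=> n.
    have [Sc c0] := Hs n; split; last by rewrite tofrac_eq0 polyC_eq0.
    by exists (c n)%:P, 0%N; split; [exact: polySD_C|rewrite expr0 tofrac1 divr1].
  have [s [[Ss s0] ->]] := Hd n.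
  exists (tf s%:P); split; last by rewrite polyCM tofracM.
  split; last by rewrite tofrac_eq0 polyC_eq0.
  by exists s%:P, 0%N; split; [exact: polySD_C|rewrite expr0 tofrac1 divr1].
have [N HN] := H _ Hb; exists N => n Nn.
have [t [[[p [m [Sp ->]]] t0] Ht]] := HN n Nn.
have e1 : tf (c n.+1)%:P * tf ('X^m) = tf (c n)%:P * tf p.
  by rewrite Ht -mulrA (divfK (tfX_neq0 _ m)).
have e2 : (c n.+1)%:P * 'X^m = (c n)%:P * p by apply/eqP; rewrite -tofrac_eq !tofracM e1.
have e : c n.+1 = c n * p`_m.
  by have := congr1 (fun q : {poly R} => q`_m) e2; rewrite /= !coefCM coefXn eqxx mulr1.
exists p`_m; split => //; split; first exact: Sp.
apply/eqP => h; move: e; rewrite h mulr0 => e.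
by case: (Hs n.+1) => _; rewrite e eqxx.
Qed.


Lemma accp_laurent : ACCP S -> ACCP (laurentSD S).
Proof.
move=> /(accp_poly hS).
rewrite (ACCP_iffD (polySD_1 hS) (polySD_M hS)) (ACCP_iffD (laurent_1 hS) (laurent_M hS)) => H f [Hs Hd].
have ex : forall k, exists x : {poly R} * nat * nat, polySD S (fst (fst x)) /\ (fst (fst x))`_0 != 0 /\ f k = tf (fst (fst x)) * (tf ('X^(snd (fst x))) / tf ('X^(snd x))).
  move=> k; have [q [a [b h]]] := norm_laurent (Hs k); by exists (q, a, b).
pose g k := proj1_sig (constructive_indefinite_description _ (ex k)).
have Hg : forall k, _ := fun k => proj2_sig (constructive_indefinite_description _ (ex k)).
pose Q k := fst (fst (g k)); pose A k := snd (fst (g k)); pose B k := snd (g k).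
have HQ : forall k, polySD S (Q k) /\ (Q k)`_0 != 0 /\ f k = tf (Q k) * (tf ('X^(A k)) / tf ('X^(B k))).
  exact: Hg.
have Qn0 : forall k, Q k != 0.
  by move=> k; have [_ [h _]] := HQ k; apply: contraNneq h => ->; rewrite coef0.
have Hc : dchain (polySD S) Q.
  split=> k; first by have [h _] := HQ k; split.
  have [gg [Sg Hfg]] := Hd k.
  have [r [c [d [Sr [r0 Hr]]]]] := norm_laurent Sg.
  have [_ [h0 hk]] := HQ k; have [_ [h1 hk1]] := HQ k.+1.
  have e : tf (Q k) * (tf ('X^(A k)) / tf ('X^(B k))) =
           tf (Q k.+1 * r) * (tf ('X^(A k.+1 + c)) / tf ('X^(B k.+1 + d))).
    rewrite -hk Hfg hk1 Hr !exprD !tofracM; exact: ac1.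
  have := laurent_uniq h0 _ e; rewrite coef0M mulf_neq0 // => /(_ isT) ->.
  exists r; split => //; split => //; by apply: contraNneq r0 => ->; rewrite coef0.
have [N HN] := H _ Hc; exists N => k Nk.
have [t [[St t0] Ht]] := HN k Nk.
exists (tf (t * 'X^(A k.+1 + B k)) / tf ('X^(B k.+1 + A k))); split.
  split.
    by exists (t * 'X^(A k.+1 + B k)), (B k.+1 + A k)%N; split => //; apply: polySD_M => //; exact: polySD_Xn.
  by rewrite mulf_neq0 ?invr_eq0 ?tfX_neq0 // tofrac_eq0 mulf_neq0 // monic_neq0 // monicXn.
have [_ [_ hk]] := HQ k; have [_ [_ hk1]] := HQ k.+1.
rewrite hk1 hk Ht !exprD !tofracM; apply: ac2; exact: tfX_neq0.
Qed.

Theorem main_thm : (ACCP S <-> ACCP (polySD S)) /\ (ACCP S <-> ACCP (laurentSD S)).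
Proof.
split; split; [exact: accp_poly|exact: accp_poly_inv|exact: accp_laurent|exact: accp_laurent_inv].
Qed.
End Main.

Unset Implicit Arguments. Set Strict Implicit.

Theorem theorem3p3 (R : idomainType) (S : R -> Prop) :
  semidomain S ->
  (ACCP S <-> ACCP (polySD S)) /\ (ACCP S <-> ACCP (laurentSD S)).
Proof. move=> hS; exact: (main_thm hS). Qed.
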